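(* Let $(\mathfrak{g}_\sigma,\mathfrak{q})$ be a reductive $CR$-algebra with invariant complement $\mathfrak{q}^c$. Then every element $Z\in\sigma(\mathfrak{q})\setminus\mathfrak{q}$ of finite Levi-order admits a Levi-sequence of minimal length all of whose elements belong to $\mathfrak{q}\cap\sigma(\mathfrak{q}^c)$.
   Context: $\mathfrak{g}$ is a finite-dimensional complex Lie algebra, $\sigma$ an anti-$\mathbb{C}$-linear involution, $\mathfrak{g}_\sigma$ its fixed points; $(\mathfrak{g}_\sigma,\mathfrak{q})$ with $\mathfrak{q}$ a complex subalgebra of $\mathfrak{g}$ is a $CR$-algebra. It is reductive if there is a $\mathbb{C}$-linear complement $\mathfrak{q}^c$ of $\mathfrak{q}$ in $\mathfrak{g}$ (an invariant complement) with $[\mathfrak{q}\cap\sigma(\mathfrak{q}),\mathfrak{q}^c]\subseteq\mathfrak{q}^c$ and $\mathfrak{g}=(\mathfrak{q}\cap\sigma(\mathfrak{q}))\oplus(\mathfrak{q}\cap\sigma(\mathfrak{q}^c))\oplus(\mathfrak{q}^c\cap\sigma(\mathfrak{q}))\oplus(\mathfrak{q}^c\cap\sigma(\mathfrak{q}^c))$. Higher order commutators: $[X_1,\dots,X_h]=[[X_1,\dots,X_{h-1}],X_h]$. For $Z\in\sigma(\mathfrak{q})\setminus\mathfrak{q}$, a Levi-sequence is $(Z_1,\dots,Z_k)$ in $\mathfrak{q}$ with $[Z,Z_1,\dots,Z_k]\notin\mathfrak{q}+\sigma(\mathfrak{q})$; the Levi-order of $Z$ is the minimal length of a Levi-sequence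 ($+\infty$ if none exists). *)

(* Defs.v *)
From HB Require Import structures.
From mathcomp Require Import all_boot all_order all_algebra.
Set Implicit Arguments. Unset Strict Implicit. Unset Printing Implicit Defensive.
Import Order.TTheory GRing.Theory Num.Theory.
Local Open Scope ring_scope.

Definition lie_bracket (C : numClosedFieldType) (g : vectType C)
    (br : g -> g -> g) : Prop :=
  [/\ forall (a : C) x y z, br (a *: x + y) z = a *: br x z + br y z,
      forall x y, br x y = - br y x &
      forall x y z, br (br x y) z + br (br y z) x + br (br z x) y = 0].

Definition anti_involution (C : numClosedFieldType) (g : vectType C)
    (br : g -> g -> g) (sigma : g -> g) : Prop :=
  [/\ forall (a : C) x y, sigma (a *: x + y) = a^* *: sigma x + sigma y,
      forall x, sigma (sigma x) = x &
      forall x y, sigma (br x y) = br (sigma x) (sigma y)].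

(* membership in sigma(V) for a complex subspace V *)
Definition in_sig (C : numClosedFieldType) (g : vectType C)
    (sigma : g -> g) (V : {vspace g}) (x : g) : Prop := sigma x \in V.

Definition in_q_plus_sq (C : numClosedFieldType) (g : vectType C)
    (sigma : g -> g) (q : {vspace g}) (x : g) : Prop :=
  exists a b, a \in q /\ in_sig sigma q b /\ x = a + b.

Definition CR_algebra (C : numClosedFieldType) (g : vectType C)
    (br : g -> g -> g) (sigma : g -> g) (q : {vspace g}) : Prop :=
  [/\ lie_bracket br, anti_involution br sigma &
      forall x y, x \in q -> y \in q -> br x y \in q].

Definition reductive_CR (C : numClosedFieldType) (g : vectType C)
    (br : g -> g -> g) (sigma : g -> g) (q qc : {vspace g}) : Prop :=
  [/\ CR_algebra br sigma q,
      (q + qc = fullv)%VS /\ (q :&: qc = 0)%VS,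
      (forall x y, x \in q -> in_sig sigma q x -> y \in qc -> br x y \in qc),
      (forall x, exists a b c d,
         [/\ a \in q /\ in_sig sigma q a, b \in q /\ in_sig sigma qc b,
             c \in qc /\ in_sig sigma q c, d \in qc /\ in_sig sigma qc d &
             x = a + b + c + d]) &
      (forall a b c d,
         a \in q -> in_sig sigma q a -> b \in q -> in_sig sigma qc b ->
         c \in qc -> in_sig sigma q c -> d \in qc -> in_sig sigma qc d ->
         a + b + c + d = 0 -> [/\ a = 0, b = 0, c = 0 & d = 0])].

Definition iter_br (C : numClosedFieldType) (g : vectType C)
    (br : g -> g -> g) (Z : g) (Zs : seq g) : g := foldl br Z Zs.

Definition levi_seq (C : numClosedFieldType) (g : vectType C)
    (br : g -> g -> g) (sigma : g -> g) (q : {vspace g}) (Z : g) (Zs : seq g)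
    : Prop :=
  (forall W, W \in Zs -> W \in q) /\ ~ in_q_plus_sq sigma q (iter_br br Z Zs).

Definition finite_levi_order (C : numClosedFieldType) (g : vectType C)
    (br : g -> g -> g) (sigma : g -> g) (q : {vspace g}) (Z : g) : Prop :=
  exists Zs, levi_seq br sigma q Z Zs.

(* Main.v *)
Require Import Defs.
From HB Require Import structures.
From mathcomp Require Import all_boot all_order all_algebra.
From Stdlib Require Import Classical.
Import Order.TTheory GRing.Theory Num.Theory.
Local Open Scope ring_scope.
Set Implicit Arguments.

Lemma brDl (C : numClosedFieldType) (g : vectType C) (br : g -> g -> g) :
  lie_bracket br -> forall x y z, br (x + y) z = br x z + br y z.
Proof. by move=> [L _ _] x y z; rewrite -{1}(scale1r x) L scale1r. Qed.

Lemma brDr (C : numClosedFieldType) (g : vectType C) (br : g -> g -> g) :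
  lie_bracket br -> forall x y z, br x (y + z) = br x y + br x z.
Proof.
move=> H x y z; have [_ A _] := H.
by rewrite A brDl // opprD -!A.
Qed.

Lemma brNl (C : numClosedFieldType) (g : vectType C) (br : g -> g -> g) :
  lie_bracket br -> forall x z, br (- x) z = - br x z.
Proof.
move=> H x z; have h0 : br 0 z = 0.
  by apply: (addrI (br 0 z)); rewrite -(brDl H) !addr0.
by apply: (addrI (br x z)); rewrite -(brDl H) !subrr h0.
Qed.

Lemma foldlD (C : numClosedFieldType) (g : vectType C) (br : g -> g -> g) :
  lie_bracket br -> forall Ws x y, foldl br (x + y) Ws = foldl br x Ws + foldl br y Ws.
Proof.
move=> H; elim=> [//|W Ws IH] x y /=.
by rewrite brDl // IH.
Qed.

Lemma sigD (C : numClosedFieldType) (g : vectType C) (br : g -> g -> g) sigma :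
  anti_involution br sigma -> forall x y, sigma (x + y) = sigma x + sigma y.
Proof. by move=> [L _ _] x y; rewrite -{1}(scale1r x) L conjC1 !scale1r. Qed.

Lemma sigN (C : numClosedFieldType) (g : vectType C) (br : g -> g -> g) sigma :
  anti_involution br sigma -> forall x, sigma (- x) = - sigma x.
Proof.
move=> H x; have h0 : sigma 0 = 0.
  by apply: (addrI (sigma 0)); rewrite -(sigD H) !addr0.
by apply: (addrI (sigma x)); rewrite -(sigD H) !subrr h0.
Qed.

Lemma SD (C : numClosedFieldType) (g : vectType C) (br : g -> g -> g) sigma q :
  anti_involution br sigma -> forall x y,
  in_q_plus_sq sigma q x -> in_q_plus_sq sigma q y -> in_q_plus_sq sigma q (x + y).
Proof.
move=> H x y [a [b [ha [hb ->]]]] [c [d [hc [hd ->]]]].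
exists (a + c), (b + d); split; first exact: memvD.
split; last by rewrite addrACA.
by rewrite /in_sig (sigD H); apply: memvD.
Qed.

Lemma SN (C : numClosedFieldType) (g : vectType C) (br : g -> g -> g) sigma q :
  anti_involution br sigma -> forall x,
  in_q_plus_sq sigma q x -> in_q_plus_sq sigma q (- x).
Proof.
move=> H x [a [b [ha [hb ->]]]].
exists (- a), (- b); split; first by rewrite memvN.
split; last by rewrite opprD.
by rewrite /in_sig (sigN H) memvN.
Qed.

Lemma S0 (C : numClosedFieldType) (g : vectType C) sigma (br : g -> g -> g) q :
  anti_involution br sigma -> in_q_plus_sq sigma q 0.
Proof.
move=> H; exists 0, 0; split; first exact: mem0v.
split; last by rewrite addr0.
rewrite /in_sig -[X in sigma X](subrr 0) (sigD H) (sigN H) subrr; exact: mem0v.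
Qed.

Lemma Sbr (C : numClosedFieldType) (g : vectType C) (br : g -> g -> g) sigma q :
  CR_algebra br sigma q -> forall x A, A \in q -> in_sig sigma q A ->
  in_q_plus_sq sigma q x -> in_q_plus_sq sigma q (br x A).
Proof.
move=> [L S Q] x A hA hsA [a [b [ha [hb ->]]]].
exists (br a A), (br b A); split; first exact: Q.
split; last exact: brDl.
by rewrite /in_sig; have [_ _ ->] := S; apply: Q.
Qed.

Lemma keyA (C : numClosedFieldType) (g : vectType C) (br : g -> g -> g) sigma q Z k :
  CR_algebra br sigma q ->
  (forall Ws, (forall W, W \in Ws -> W \in q) -> (size Ws < k)%N ->
     in_q_plus_sq sigma q (iter_br br Z Ws)) ->
  forall A, A \in q -> in_sig sigma q A ->
  forall Ws Vs, (forall W, W \in Vs -> W \in q) -> (forall W, W \in Ws -> W \in q) ->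
  (size Vs + (size Ws).+1 = k)%N ->
  in_q_plus_sq sigma q (iter_br br Z (Vs ++ A :: Ws)).
Proof.
move=> CR Hmin A hA hsA; have [L S Q] := CR.
elim=> [|W Ws IH] Vs hV hW hk.
  rewrite /iter_br foldl_cat /=; apply: (Sbr CR) => //.
  by apply: Hmin => //; rewrite -hk addn1.
rewrite /iter_br foldl_cat /=.
have [_ As J] := L.
set X := foldl br Z Vs.
have E : br (br X A) W = br (br X W) A + br X (br A W).
  have J0 := J X A W.
  have h1 := As (br A W) X.
  have h2 : br (br W X) A = - br (br X W) A by rewrite (As W X) (brNl L).
  move/eqP: J0; rewrite h1 h2 -addrA addr_eq0 opprD !opprK => /eqP ->.
  by rewrite addrC.
rewrite E (foldlD L); apply: (SD S).
  have hV1 : forall V, V \in rcons Vs W -> V \in q.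
    by move=> V; rewrite mem_rcons inE => /orP[/eqP->|/hV] //; apply: hW; rewrite inE eqxx.
  have hW1 : forall V, V \in Ws -> V \in q.
    by move=> V hV'; apply: hW; rewrite inE hV' orbT.
  have hk1 : (size (rcons Vs W) + (size Ws).+1)%N = k.
    by rewrite size_rcons -hk /= addSnnS.
  have := IH (rcons Vs W) hV1 hW1 hk1.
  by rewrite /iter_br -cats1 -catA /= foldl_cat /=.
have := Hmin (Vs ++ br A W :: Ws); rewrite /iter_br foldl_cat /=; apply.
  move=> V; rewrite mem_cat inE => /orP[/hV//|/orP[/eqP->|hV']].
    by apply: Q => //; apply: hW; rewrite inE eqxx.
  by apply: hW; rewrite inE hV' orbT.
by rewrite size_cat /= -hk /= !addnS ltnS ltnSn.
Qed.

Lemma decomp_q (C : numClosedFieldType) (g : vectType C) (br : g -> g -> g) sigma q qc :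
  reductive_CR br sigma q qc -> forall x, x \in q ->
  exists a b, [/\ a \in q, in_sig sigma q a, b \in q, in_sig sigma qc b & x = a + b].
Proof.
move=> [CR [_ cap] _ dec _] x hx.
have [a [b [c [d [[ha hsa] [hb hsb] [hc _] [hd _] E]]]]] := dec x.
exists a, b; split=> //.
have hcd : c + d \in (q :&: qc)%VS.
  rewrite memv_cap; apply/andP; split; last exact: memvD.
  have -> : c + d = x - a - b by rewrite E -(addrA (a+b)) -addrA -opprD (addrC (a+b)) addrK.
  by rewrite !memvB.
by move: hcd; rewrite cap memv0 => /eqP hcd; rewrite E -addrA hcd addr0.
Qed.

Lemma keyB (C : numClosedFieldType) (g : vectType C) (br : g -> g -> g) sigma q qc Z k :
  reductive_CR br sigma q qc ->
  (forall Ws, (forall W, W \in Ws -> W \in q) -> (size Ws < k)%N ->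
     in_q_plus_sq sigma q (iter_br br Z Ws)) ->
  forall Ws Vs, (forall W, W \in Vs -> W \in q) -> (forall W, W \in Ws -> W \in q) ->
  (size Vs + size Ws = k)%N ->
  exists Bs, [/\ size Bs = size Ws,
     (forall W, W \in Bs -> W \in q /\ in_sig sigma qc W) &
     in_q_plus_sq sigma q (iter_br br Z (Vs ++ Ws) - iter_br br Z (Vs ++ Bs))].
Proof.
move=> R Hmin; have [CR _ _ _ _] := R; have [L S Q] := CR.
elim=> [|W Ws IH] Vs hV hW hk.
  exists [::]; split=> //; rewrite subrr; exact: S0 S.
have hWq : W \in q by apply: hW; rewrite inE eqxx.
have hWs : forall V, V \in Ws -> V \in q by move=> V h; apply: hW; rewrite inE h orbT.
have [a [b [ha hsa hb hsb E]]] := decomp_q R hWq.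
have [Bs [hs hB hd]] := IH (rcons Vs b) ltac:(by move=> V; rewrite mem_rcons inE => /orP[/eqP->|/hV]) hWs
  ltac:(by rewrite size_rcons -hk addnS addSn).
exists (b :: Bs); split; first by rewrite /= hs.
  move=> V; rewrite inE => /orP[/eqP->|/hB] //.
move: hd; rewrite -!cats1 -!catA /= => hd.
have -> : iter_br br Z (Vs ++ W :: Ws) =
   iter_br br Z (Vs ++ a :: Ws) + iter_br br Z (Vs ++ b :: Ws).
  by rewrite /iter_br !foldl_cat /= E (brDr L) (foldlD L).
rewrite -addrA; apply: (SD S) => //.
exact: (keyA Z CR Hmin ha hsa Ws Vs hV hWs hk).
Qed.

Unset Implicit Arguments.

Theorem lemma3p10 (C : numClosedFieldType) (g : vectType C)
    (br : g -> g -> g) (sigma : g -> g) (q qc : {vspace g}) (Z : g) :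
  reductive_CR br sigma q qc ->
  in_sig sigma q Z -> Z \notin q ->
  finite_levi_order br sigma q Z ->
  exists Zs : seq g,
    [/\ levi_seq br sigma q Z Zs,
        (forall Ws, levi_seq br sigma q Z Ws -> (size Zs <= size Ws)%N) &
        (forall W, W \in Zs -> W \in q /\ in_sig sigma qc W)].
Proof.
move=> R _ _ [Zs0 hZs0].
have [CR _ _ _ _] := R.
suff: forall n Zs, size Zs = n -> levi_seq br sigma q Z Zs -> exists Zs : seq g,
    [/\ levi_seq br sigma q Z Zs,
        (forall Ws, levi_seq br sigma q Z Ws -> (size Zs <= size Ws)%N) &
        (forall W, W \in Zs -> W \in q /\ in_sig sigma qc W)].
  by move=> /(_ _ Zs0 erefl hZs0).
elim/ltn_ind=> n IH Zs hn [hq hnot].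
case: (classic (exists Ws, levi_seq br sigma q Z Ws /\ (size Ws < n)%N)).
  by move=> [Ws [hWs hlt]]; apply: (IH _ hlt Ws erefl hWs).
move=> Hno.
have Hmin : forall Ws, (forall W, W \in Ws -> W \in q) -> (size Ws < n)%N ->
     in_q_plus_sq sigma q (iter_br br Z Ws).
  move=> Ws hW hlt; apply: NNPP => hn'; apply: Hno; exists Ws; split=> //.
have [Bs [hs hB hd]] := keyB Z R Hmin Zs [::] ltac:(by []) hq hn.
have hBs : levi_seq br sigma q Z Bs.
  split; first by move=> W /hB [].
  move=> hin; apply: hnot.
  have [_ Sa _] := CR; have := SD Sa hd hin.
  by rewrite /= subrK.
exists Bs; split=> //.
move=> Ws hWs; rewrite hs hn leqNgt; apply/negP => hlt.
by apply: Hno; exists Ws.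
Qed.
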